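(* Let $(G,\cdot,N,\star,\odot)$ be a left bracoid, i.e. a left skew bracoid in which $(N,\star)$ is abelian. Then for every $g\in G$ the map $\alpha(g):N\to N$, ${}^{\alpha(g)}\eta=\overline{(g\odot e_N)}\star(g\odot\eta)\star\overline{\eta}$, is an endomorphism of the group $(N,\star)$.
   Context: For a group $(N,\star)$, $e_N$ denotes its identity and $\overline{\eta}$ the inverse of $\eta$. A left skew bracoid is a 5-tuple $(G,\cdot,N,\star,\odot)$ where $(G,\cdot)$ and $(N,\star)$ are groups and $\odot$ is a transitive (left) action of $(G,\cdot)$ on the set $N$ such that $g\odot(\mu\star\eta)=(g\odot\mu)\star\overline{(g\odot e_N)}\star(g\odot\eta)$ for all $g\in G$, $\mu,\eta\in N$. *)

(* Defs.v *)
Record is_group (T : Type) (mul : T -> T -> T) (e : T) (inv : T -> T) : Prop := {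
  grp_assoc : forall x y z, mul x (mul y z) = mul (mul x y) z;
  grp_idl : forall x, mul e x = x;
  grp_idr : forall x, mul x e = x;
  grp_invl : forall x, mul (inv x) x = e;
  grp_invr : forall x, mul x (inv x) = e
}.

Definition is_abelian (T : Type) (mul : T -> T -> T) : Prop :=
  forall x y, mul x y = mul y x.

Definition is_left_action (G N : Type) (mulG : G -> G -> G) (eG : G)
  (act : G -> N -> N) : Prop :=
  (forall x, act eG x = x) /\
  (forall g h x, act (mulG g h) x = act g (act h x)).

Definition is_transitive (G N : Type) (act : G -> N -> N) : Prop :=
  forall x y : N, exists g : G, act g x = y.

Definition is_left_skew_bracoid (G N : Type)
  (mulG : G -> G -> G) (eG : G) (invG : G -> G)
  (mulN : N -> N -> N) (eN : N) (invN : N -> N)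
  (act : G -> N -> N) : Prop :=
  is_group G mulG eG invG /\
  is_group N mulN eN invN /\
  is_left_action G N mulG eG act /\
  is_transitive G N act /\
  (forall g mu eta,
     act g (mulN mu eta) = mulN (mulN (act g mu) (invN (act g eN))) (act g eta)).

Definition is_left_bracoid (G N : Type)
  (mulG : G -> G -> G) (eG : G) (invG : G -> G)
  (mulN : N -> N -> N) (eN : N) (invN : N -> N)
  (act : G -> N -> N) : Prop :=
  is_left_skew_bracoid G N mulG eG invG mulN eN invN act /\ is_abelian N mulN.

Definition is_group_endo (N : Type) (mulN : N -> N -> N) (f : N -> N) : Prop :=
  forall x y, f (mulN x y) = mulN (f x) (f y).

Definition alpha (G N : Type) (mulN : N -> N -> N) (eN : N) (invN : N -> N)
  (act : G -> N -> N) (g : G) (eta : N) : N :=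
  mulN (mulN (invN (act g eN)) (act g eta)) (invN eta).

(* Main.v *)
Require Import Defs.

Theorem corollary2p5 (G N : Type)
  (mulG : G -> G -> G) (eG : G) (invG : G -> G)
  (mulN : N -> N -> N) (eN : N) (invN : N -> N)
  (act : G -> N -> N) :
  is_left_bracoid G N mulG eG invG mulN eN invN act ->
  forall g : G, is_group_endo N mulN (alpha G N mulN eN invN act g).
Proof.
  intros [[_ [HN [_ [_ Hb]]]] Hc] g x y.
  destruct HN as [A L R IL IR].
  unfold alpha.
  assert (Hinv : invN (mulN x y) = mulN (invN x) (invN y)).
  { assert (U : forall z w, mulN z w = eN -> w = invN z).
    { intros z w H. rewrite <- (L w), <- (IL z), <- A, H, R. reflexivity. }
    symmetry. apply U.
    rewrite <- A, (A y), (Hc y (invN x)), <- A, IR, R, IR. reflexivity. }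
  rewrite Hinv, Hb.
  set (c := invN (act g eN)). set (a := act g x). set (b := act g y).
  set (u := invN x). set (v := invN y).
  rewrite <- !A. f_equal. f_equal.
  rewrite (Hc c (mulN b (mulN u v))). rewrite <- !A.
  rewrite (A b u), (Hc b u), <- (A u b). f_equal.
  rewrite A, (Hc c). reflexivity.
Qed.
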